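(* Let $0<q<1$ and $t>0$, let $n\ge 0$ be an integer, and let $u\in\mathbb{C}\setminus\{0\}$. Then $$\left|S_n(q^{-nt}u;q)\right|\le \frac{|u|^n\,A_q\!\left(-\frac{q^{n(t-2)}}{|u|}\right)}{(q;q)_\infty\, q^{n^2(t-1)}}.$$
   Context: Notation: $(a;q)_0:=1$, $(a;q)_k:=\prod_{j=0}^{k-1}(1-aq^j)$, $(a;q)_\infty:=\prod_{j=0}^{\infty}(1-aq^j)$. Ramanujan's function is the entire function $A_q(z):=\sum_{k=0}^{\infty}\frac{q^{k^2}}{(q;q)_k}(-z)^k$. The Stieltjes–Wigert polynomials are $S_n(x;q):=\sum_{k=0}^{n}\frac{q^{k^2}(-x)^k}{(q;q)_k(q;q)_{n-k}}$. *)

(* Defs.v *)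
From Stdlib Require Import Reals.
From Coquelicot Require Import Coquelicot.

Open Scope R_scope.

Fixpoint qpoch (a q : R) (k : nat) : R :=
  match k with
  | O => 1
  | S k' => qpoch a q k' * (1 - a * q ^ k')
  end.

Definition qpoch_inf (q : R) : R := real (Lim_seq (fun k => qpoch q q k)).

Definition ramanujanA (q z : R) : R :=
  Series (fun k => q ^ (k * k) / qpoch q q k * (- z) ^ k).

Definition stieltjesWigert (n : nat) (x : C) (q : R) : C :=
  sum_n (fun k => Cmult (RtoC (q ^ (k * k) / (qpoch q q k * qpoch q q (n - k))))
                        (Cpow (Copp x) k)) n.

(* Main.v *)
Require Import Defs.
From Stdlib Require Import Reals Lra Lia.
From Coquelicot Require Import Coquelicot.
Open Scope R_scope.
Lemma pow_pos_le1 q k : 0 < q -> q < 1 -> 0 < q ^ k <= 1.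
Proof. intros. induction k; simpl; [lra|]. split; [apply Rmult_lt_0_compat; lra|]. nra. Qed.

Lemma P_pos q k : 0 < q -> q < 1 -> 0 < qpoch q q k.
Proof. intros. induction k; simpl; [lra|]. pose proof (pow_pos_le1 q k H H0).
  apply Rmult_lt_0_compat; nra. Qed.

Lemma P_dec q k : 0 < q -> q < 1 -> qpoch q q (S k) <= qpoch q q k.
Proof. intros. simpl. pose proof (pow_pos_le1 q k H H0). pose proof (P_pos q k H H0).
  assert (0 <= qpoch q q k * (q * q^k)) by (apply Rmult_le_pos; nra). nra. Qed.

Lemma P_dec_le q k m : 0 < q -> q < 1 -> (k <= m)%nat -> qpoch q q m <= qpoch q q k.
Proof. intros. induction H1; [lra|]. pose proof (P_dec q m H H0). lra. Qed.

Lemma exp_bound q x : 0 < q -> q < 1 -> 0 < x <= q -> exp (- (x / (1 - q))) <= 1 - x.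
Proof. intros. set (y := x / (1 - q)).
  assert (Hy : 0 < y) by (unfold y; apply Rdiv_lt_0_compat; lra).
  pose proof (exp_ineq1_le y). 
  assert (exp (-y) * exp y = 1) by (rewrite <- exp_plus; replace (-y+y) with 0 by ring; apply exp_0).
  assert (x * (1 + y) <= y).
  { unfold y. apply (Rmult_le_reg_r (1 - q)); [lra|]. replace (x * (1 + x / (1 - q)) * (1 - q)) with (x*(1-q) + x*x) by (field; lra).
    replace (x / (1 - q) * (1 - q)) with x by (field; lra). nra. }
  pose proof (exp_pos (-y)). nra. Qed.

Lemma P_low q k : 0 < q -> q < 1 -> exp (- (q * (1 - q ^ k) / (1 - q) ^ 2)) <= qpoch q q k.
Proof. intros. induction k.
  - simpl. replace (- (q * (1 - 1) / ((1 - q) * ((1 - q) * 1)))) with 0 by (field; lra).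
    rewrite exp_0; lra.
  - simpl qpoch. pose proof (pow_pos_le1 q k H H0).
    assert (0 < q * q ^ k <= q) by nra.
    pose proof (exp_bound q (q * q^k) H H0 H2).
    replace (- (q * (1 - q ^ S k) / (1 - q) ^ 2)) with
      (- (q * (1 - q ^ k) / (1 - q) ^ 2) + - (q * q ^ k / (1 - q))) by (simpl; field; lra).
    rewrite exp_plus. apply Rmult_le_compat; try (left; apply exp_pos); lra.
Qed.

Lemma Pinf_props q : 0 < q -> q < 1 ->
  0 < qpoch_inf q /\ forall k, qpoch_inf q <= qpoch q q k.
Proof. intros.
  set (m := exp (- (q / (1 - q) ^ 2))).
  assert (Hm : forall k, m <= qpoch q q k).
  { intro k. eapply Rle_trans; [|apply P_low; auto]. unfold m.
    destruct (Req_dec (q / (1 - q) ^ 2) (q * (1 - q ^ k) / (1 - q) ^ 2)) as [E|E].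
    - rewrite E; lra.
    - left. apply exp_increasing. pose proof (pow_pos_le1 q k H H0).
      assert (0 < (1-q)^2) by (apply pow_lt; lra).
      apply Ropp_lt_contravar. unfold Rdiv. apply Rmult_lt_compat_r. apply Rinv_0_lt_compat; lra.
      assert (q * (1 - q^k) <= q) by nra.
      destruct H3; [auto|]. exfalso. apply E. rewrite H3. reflexivity. }
  assert (Hex : ex_finite_lim_seq (fun k => qpoch q q k)).
  { apply ex_finite_lim_seq_decr with m; auto. intro; apply P_dec; auto. }
  apply ex_finite_lim_seq_correct in Hex. destruct Hex as [_ Hf].
  unfold qpoch_inf. destruct (Lim_seq (fun k => qpoch q q k)) eqn:EL; try (simpl in Hf; discriminate).
  simpl. split.
  - assert (Rbar_le (Lim_seq (fun _ => m)) (Lim_seq (fun k => qpoch q q k))).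
    { apply Lim_seq_le_loc. exists O. intros; auto. }
    rewrite Lim_seq_const, EL in H1. simpl in H1. eapply Rlt_le_trans; [|exact H1]. apply exp_pos.
  - intro k. assert (Rbar_le (Lim_seq (fun k => qpoch q q k)) (Lim_seq (fun _ => qpoch q q k))).
    { apply Lim_seq_le_loc. exists k. intros; apply P_dec_le; auto. }
    rewrite Lim_seq_const, EL in H1. exact H1.
Qed.
Lemma pow_exp x m : 0 < x -> x ^ m = exp (INR m * ln x).
Proof. intros. rewrite <- Rpower_pow by auto. reflexivity. Qed.

Lemma key_exp q t U n k : 0 < q -> 0 < U -> (k <= n)%nat ->
  q^(k*k) * (Rpower q (-(INR n * t)) * U)^k
  = q^((n-k)*(n-k)) * (Rpower q (INR n * (t-2)) / U)^(n-k) * U^n / Rpower q (INR n ^2 * (t-1)).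
Proof. intros Hq HU Hk.
  assert (0 < Rpower q (-(INR n * t))) by apply exp_pos.
  assert (0 < Rpower q (INR n * (t-2))) by apply exp_pos.
  rewrite !(pow_exp q) by auto.
  rewrite (pow_exp (Rpower q (-(INR n * t)) * U)) by (apply Rmult_lt_0_compat; auto).
  rewrite (pow_exp (Rpower q (INR n * (t-2)) / U)) by (apply Rdiv_lt_0_compat; auto).
  rewrite (pow_exp U) by auto.
  rewrite ln_mult, ln_div by auto. unfold Rpower. rewrite !ln_exp.
  unfold Rdiv. rewrite <- exp_Ropp, <- !exp_plus. f_equal.
  rewrite !mult_INR, !minus_INR by auto. ring.
Qed.

Lemma pow_mono_dec q a b : 0 < q -> q < 1 -> (b <= a)%nat -> q ^ a <= q ^ b.
Proof. intros. replace a with (b + (a - b))%nat by lia. rewrite pow_add.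
  pose proof (pow_pos_le1 q b H H0). pose proof (pow_pos_le1 q (a-b) H H0). nra. Qed.

Lemma ram_series q w : 0 < q -> q < 1 -> 0 <= w ->
  ex_series (fun j => q^(j*j) / qpoch q q j * w^j).
Proof. intros Hq Hq1 Hw.
  destruct (Pinf_props q Hq Hq1) as [Hl Hle]. set (l := qpoch_inf q) in *.
  destruct (pow_lt_1_zero q) with (y := / (w + 1)) as [N HN].
  { rewrite Rabs_pos_eq; lra. } { apply Rinv_0_lt_compat; lra. }
  specialize (HN N (le_n N)). rewrite Rabs_pos_eq in HN by (left; apply pow_pos_le1; auto).
  set (r := q ^ N * w).
  assert (Hr : 0 <= r < 1).
  { unfold r. pose proof (pow_pos_le1 q N Hq Hq1). split; [nra|].
    apply Rmult_lt_compat_r with (r := w + 1) in HN; [|lra].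
    rewrite Rinv_l in HN by lra. nra. }
  apply (ex_series_incr_n _ N).
  apply (@ex_series_le R_AbsRing R_CompleteNormedModule) with (b := fun j => (w ^ N / l) * r ^ j).
  - intro j. change (norm (q ^ ((N + j) * (N + j)) / qpoch q q (N + j) * w ^ (N + j)))
      with (Rabs (q ^ ((N + j) * (N + j)) / qpoch q q (N + j) * w ^ (N + j))).
    pose proof (P_pos q (N+j) Hq Hq1). pose proof (Hle (N+j)%nat).
    pose proof (pow_pos_le1 q ((N + j) * (N + j)) Hq Hq1).
    assert (0 <= w ^ (N+j)) by (apply pow_le; auto).
    rewrite Rabs_pos_eq.
    2:{ apply Rmult_le_pos; auto. apply Rdiv_le_0_compat; lra. }
    assert (q ^ ((N + j) * (N + j)) <= q ^ (N*j)) by (apply pow_mono_dec; auto; nia).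
    unfold r. rewrite Rpow_mult_distr, <- pow_mult, pow_add.
    assert (0 <= w^N) by (apply pow_le; auto). assert (0 <= w^j) by (apply pow_le; auto).
    assert (/ qpoch q q (N + j) <= / l) by (apply Rinv_le_contravar; auto).
    assert (0 < / qpoch q q (N + j)) by (apply Rinv_0_lt_compat; auto).
    unfold Rdiv.
    apply Rle_trans with (q ^ (N * j) * / l * (w ^ N * w ^ j)).
    + apply Rmult_le_compat_r; [nra|]. apply Rmult_le_compat; nra.
    + right; ring.
  - apply (ex_series_scal_l (w ^ N / l) (fun j => r ^ j)). apply ex_series_geom.
    rewrite Rabs_pos_eq; lra.
Qed.

Lemma Series_ge_partial (a : nat -> R) n : (forall k, 0 <= a k) -> ex_series a ->
  sum_f_R0 a n <= Series a.
Proof. intros Ha He. rewrite (Series_incr_n a (S n)) by (lia || auto). simpl pred.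
  assert (0 <= Series (fun k => a (S n + k)%nat)).
  { assert (Series (fun _ : nat => 0) = 0).
    { rewrite <- (Series_ext (fun n => 0 * (fun _ => 0) n)) by (intro; simpl; ring).
      rewrite Series_scal_l. ring. }
    rewrite <- H. apply Series_le. intro; split; [lra|apply Ha].
    apply (ex_series_incr_n a (S n)); auto. }
  lra. Qed.

Lemma Cmod_sum (f : nat -> C) n : Cmod (sum_n f n) <= sum_f_R0 (fun k => Cmod (f k)) n.
Proof. induction n.
  - rewrite sum_O. simpl. lra.
  - rewrite sum_Sn. simpl. eapply Rle_trans; [apply Cmod_triangle|]. lra.
Qed.

Theorem mainTheorem2 (q t : R) (n : nat) (u : C) :
  0 < q -> q < 1 -> 0 < t -> u <> RtoC 0 ->
  Cmod (stieltjesWigert n (Cmult (RtoC (Rpower q (- (INR n * t)))) u) q)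
  <= (Cmod u ^ n * ramanujanA q (- (Rpower q (INR n * (t - 2)) / Cmod u)))
     / (qpoch_inf q * Rpower q (INR n ^ 2 * (t - 1))).
Proof.
  intros Hq Hq1 Ht Hu.
  destruct (Pinf_props q Hq Hq1) as [Hl Hle].
  assert (HU : 0 < Cmod u) by (apply Cmod_gt_0; auto).
  assert (HE : 0 < Rpower q (- (INR n * t))) by apply exp_pos.
  assert (HQ : 0 < Rpower q (INR n ^ 2 * (t - 1))) by apply exp_pos.
  assert (Hw : 0 < Rpower q (INR n * (t - 2)) / Cmod u) by (apply Rdiv_lt_0_compat; auto; apply exp_pos).
  set (w := Rpower q (INR n * (t - 2)) / Cmod u) in *.
  set (b := fun j => q^(j*j) / qpoch q q j * w^j).
  assert (Hb : forall j, 0 <= b j).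
  { intro j. unfold b. apply Rmult_le_pos; [apply Rdiv_le_0_compat|apply pow_le; lra].
    left; apply pow_pos_le1; auto. apply P_pos; auto. }
  assert (Hser : ramanujanA q (- w) = Series b).
  { unfold ramanujanA. apply Series_ext. intro k. unfold b. rewrite Ropp_involutive. reflexivity. }
  rewrite Hser.
  set (c := Cmod u ^ n / (qpoch_inf q * Rpower q (INR n ^ 2 * (t - 1)))).
  assert (Hc : 0 <= c).
  { unfold c. apply Rdiv_le_0_compat. apply pow_le; lra. apply Rmult_lt_0_compat; auto. }
  unfold stieltjesWigert.
  eapply Rle_trans; [apply Cmod_sum|].
  apply Rle_trans with (sum_f_R0 (fun k => b (n-k)%nat * c) n).
  { apply sum_Rle. intros k Hk.
    rewrite Cmod_mult, Cmod_R, Cmod_pow, Cmod_opp, Cmod_mult, Cmod_R.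
    pose proof (P_pos q k Hq Hq1). pose proof (P_pos q (n-k) Hq Hq1).
    pose proof (Hle k).
    assert (0 < q ^ (k*k)) by (apply pow_pos_le1; auto).
    rewrite (Rabs_pos_eq (Rpower q _)) by lra.
    rewrite Rabs_pos_eq.
    2:{ apply Rdiv_le_0_compat; [lra|]. apply Rmult_lt_0_compat; auto. }
    replace (q ^ (k * k) / (qpoch q q k * qpoch q q (n - k)) *
      (Rpower q (- (INR n * t)) * Cmod u) ^ k)
      with ((q ^ (k * k) * (Rpower q (- (INR n * t)) * Cmod u) ^ k) / (qpoch q q k * qpoch q q (n - k)))
      by (field; lra).
    rewrite key_exp by auto.
    fold w.
    unfold b, c.
    set (A := q ^ ((n - k) * (n - k)) * w ^ (n - k) * Cmod u ^ n / Rpower q (INR n ^ 2 * (t - 1))).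
    assert (HA : 0 <= A).
    { unfold A. apply Rdiv_le_0_compat; [|auto].
      apply Rmult_le_pos; [apply Rmult_le_pos|]; try (apply pow_le; lra).
      all: try (left; apply pow_pos_le1; auto). }
    replace (q ^ ((n - k) * (n - k)) / qpoch q q (n - k) * w ^ (n - k) *
      (Cmod u ^ n / (qpoch_inf q * Rpower q (INR n ^ 2 * (t - 1)))))
      with (A / (qpoch_inf q * qpoch q q (n - k))) by (unfold A; field; lra).
    unfold Rdiv. apply Rmult_le_compat_l; auto.
    apply Rinv_le_contravar. apply Rmult_lt_0_compat; auto.
    apply Rmult_le_compat_r; lra. }
  rewrite <- scal_sum. rewrite (sum_f_R0_skip b n).
  replace (Cmod u ^ n * Series b / (qpoch_inf q * Rpower q (INR n ^ 2 * (t - 1))))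
    with (c * Series b) by (unfold c; field; split; lra).
  apply Rmult_le_compat_l; auto.
  apply Series_ge_partial; auto.
  apply ram_series; auto; lra.
Qed.
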